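(* Let $T$ be a tournament, let $P=x_0x_1\ldots x_r$ be a path of length $r$ in $T$, and let $z\in V(T)\setminus V(P)$ be a vertex such that every vertex of $\{x_{\alpha+1},x_{\alpha+2},\ldots,x_r\}$ dominates $z$ and $z$ dominates every vertex of $\{x_0,x_1,\ldots,x_\alpha\}$, where $\alpha\in[2,r-3]$. Assume that $T$ contains no $(x_0,x_r)$-path of length $r+1$ whose vertex set is $\{z\}\cup V(P)$. Suppose that $x_sx_t$ is an arc of $T$ with $s\in[\alpha,r-2]$ and $t\in[s+2,r]$, and let $k=\lfloor \frac{1}{2}(t-s)\rfloor$. Then no vertex of $\{x_0,x_1,\ldots,x_{\alpha-1}\}$ dominates a vertex of $\{x_{s+1},x_{s+2},\ldots,x_{s+k}\}$.
   Context: Paths are directed and simple; the length of a path is its number of arcs. A vertex $u$ dominates $v$ if $uv$ is an arc. $[a,b]$ denotes the integers from $a$ to $b$. *)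

(* Defs.v *)
From mathcomp Require Import all_boot.
Set Implicit Arguments. Unset Strict Implicit. Unset Printing Implicit Defensive.

(* A tournament on a finite vertex type T, given by its arc relation a:
   a u v means "u dominates v". Loopless, and for distinct u, v exactly one
   of the arcs uv, vu is present. *)
Definition tournament (T : finType) (a : rel T) : Prop :=
  (forall u, ~~ a u u) /\ (forall u v, u != v -> a u v = ~~ a v u).

(* A (directed, simple) path given as the sequence of its vertices:
   nonempty, no repeated vertex, consecutive vertices joined by arcs.
   Its length is (size p).-1. *)
Definition dpath (T : finType) (a : rel T) (p : seq T) : bool :=
  if p is x :: q then path a x q && uniq p else false.

(* Main.v *)
Require Import Defs.
From mathcomp Require Import all_boot.
From mathcomp Require Import zify.

Theorem lemma3p4 (T : finType) (a : rel T) (r : nat) (x : nat -> T) (z : T)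
    (alpha s t : nat) :
  tournament a ->
  (* P = x_0 x_1 ... x_r is a path of length r *)
  {in [pred i | i <= r] &, injective x} ->
  (forall i, i < r -> a (x i) (x i.+1)) ->
  (* z is not on P *)
  (forall i, i <= r -> z != x i) ->
  2 <= alpha -> alpha <= r - 3 ->
  (forall i, alpha < i <= r -> a (x i) z) ->
  (forall i, i <= alpha -> a z (x i)) ->
  (* no (x_0, x_r)-path of length r+1 with vertex set {z} ∪ V(P) *)
  ~ (exists q : seq T,
       [/\ dpath a (x 0 :: q), last (x 0) q = x r, size q = r.+1 &
           [set y | y \in x 0 :: q] = z |: [set x (val i) | i : 'I_r.+1]]) ->
  alpha <= s -> s <= r - 2 -> s + 2 <= t -> t <= r ->
  a (x s) (x t) ->
  forall i j, i < alpha -> s < j <= s + (t - s)./2 -> ~~ a (x i) (x j).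
Proof.
move=> [Hirr Htour] Hinj Hpath Hzx Ha2 Har Hxz Hzx2 Hno Has Hsr Hst Htr Hst_arc i j Hi Hj.
apply/negP => Hij.
pose y := fun k => if k == r.+1 then z else x k.
have yx : forall k, k <= r -> y k = x k.
  by move=> k Hk; rewrite /y; case: eqP => // E; lia.
have yz : y r.+1 = z by rewrite /y eqxx.
have seg : forall m n, m + n <= r -> path (relpre y a) m (iota m.+1 n).
  move=> m n; elim: n m => [|n IH] m H //=.
  apply/andP; split; last by apply: IH; lia.
  rewrite /= !yx; [apply: Hpath| |]; lia.
have lastI : forall m n, last m (iota m.+1 n) = m + n.
  by move=> m n; elim: n m => [|n IH] m /=; [rewrite addn0 | rewrite IH; lia].
have core : forall s t, alpha <= s -> s < j < t -> t <= r -> a (x s) (x t) ->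
    (j = s.+1 \/ a (x t.-1) (x s.+1)) -> False.
  move=> s' t' Has' Hjs Htr' Hst' Hor.
  apply: Hno.
  pose l' := iota 1 i ++ iota j (t'-j) ++ iota s'.+1 (j - s'.+1) ++
             r.+1 :: iota i.+1 (s'-i) ++ iota t' (r.+1-t').
  have Hp : perm_eq (0 :: l') (iota 0 r.+2).
    have -> : r.+2 = i.+1 + ((s'-i) + ((j-s'.+1) + ((t'-j) + ((r.+1-t') + 1)))) by lia.
    rewrite !iotaD.
    have -> : 0 + i.+1 = i.+1 by lia.
    have -> : i.+1 + (s' - i) = s'.+1 by lia.
    have -> : s'.+1 + (j - s'.+1) = j by lia.
    have -> : j + (t' - j) = t' by lia.
    have -> : t' + (r.+1 - t') = r.+1 by lia.
    apply/permP => P; rewrite /l' /= !count_cat /= !count_cat; lia.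
  have memP : forall k, (k \in 0 :: l') = (k < r.+2).
    by move=> k; rewrite (perm_mem Hp) mem_iota.
  exists (map y l'); split.
  - rewrite /dpath -(yx 0) // -map_cons; apply/andP; split.
      rewrite path_map /l' cat_path seg; last lia.
      rewrite lastI add0n.
      have -> : t' - j = (t' - j).-1.+1 by lia.
      rewrite /= !yx; try lia.
      rewrite Hij /= cat_path seg; last lia.
      rewrite lastI.
      have tail : path (relpre y a) r.+1 (iota i.+1 (s' - i) ++ iota t' (r.+1 - t')).
        have -> : s' - i = (s' - i).-1.+1 by lia.
        rewrite /= cat_path seg; last lia.
        rewrite lastI yz yx; last lia.
        rewrite Hzx2 /=; last lia.
        have -> : r.+1 - t' = (r - t').+1 by lia.
        rewrite /= seg; last lia.
        have -> : i.+1 + (s' - i).-1 = s' by lia.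
        by rewrite !yx ?Hst'; lia.
      have -> : j + (t' - j).-1 = t'.-1 by lia.
      have [Ej | Nj] := eqVneq j s'.+1.
        rewrite Ej subnn /= tail yz yx; last lia.
        by rewrite Hxz; lia.
      have Ht : a (x t'.-1) (x s'.+1) by case: Hor => // E; rewrite E eqxx in Nj.
      have -> : j - s'.+1 = (j - s'.+2).+1 by lia.
      rewrite /= !yx; try lia.
      rewrite Ht /= cat_path seg; last lia.
      rewrite lastI /= tail yz yx; last lia.
      by rewrite Hxz; lia.
    rewrite map_inj_in_uniq ?(perm_uniq Hp) ?iota_uniq //.
    move=> p q; rewrite !memP => Hp' Hq'.
    have [Ep|Ep] := eqVneq p r.+1; have [Eq|Eq] := eqVneq q r.+1.
    + by rewrite Ep Eq.
    + rewrite Ep yz yx; last by lia.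
      by move=> E; move: (Hzx q); rewrite E eqxx; move=> /(_ ltac:(lia)).
    + rewrite Eq yz yx; last by lia.
      by move=> E; move: (Hzx p); rewrite E eqxx; move=> /(_ ltac:(lia)).
    + rewrite !yx; try lia. apply: Hinj; rewrite inE; lia.
  - rewrite -(yx 0) // last_map /l' !last_cat /= last_cat.
    have -> : r.+1 - t' = (r - t').+1 by lia.
    by rewrite /= lastI yx; [congr x|]; lia.
  - by rewrite size_map /l' !size_cat /= !size_cat !size_iota; lia.
  - apply/setP => v; rewrite inE in_setU1 -(yx 0) // -map_cons.
    apply/idP/idP.
      move/mapP => [k Hk ->]; rewrite memP in Hk.
      have [Ek|Nk] := eqVneq k r.+1; first by rewrite Ek yz eqxx.
      rewrite yx; last lia.
      apply/orP; right; apply/imsetP.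
      have Hk' : k < r.+1 by lia.
      by exists (Ordinal Hk').
    case/orP => [/eqP -> | /imsetP [k _ ->]].
      by apply/mapP; exists r.+1; rewrite ?memP ?yz.
    apply/mapP; exists (val k); first by rewrite memP; exact: leqW (ltn_ord k).
    by rewrite yx //; exact: ltn_ord k.
have main : forall n s t, j - s = n.+1 -> alpha <= s -> s.+2 <= t -> t <= r ->
    a (x s) (x t) -> j <= s + (t - s)./2 -> False.
  elim=> [|n IH] s' t' Hn Has' Hst' Htr' Harc Hjk.
    by apply: (core s' t') => //; [rewrite -divn2 in Hjk; lia | left; lia].
  have Hne : x s'.+1 != x t'.-1.
    rewrite -divn2 in Hjk.
    apply/eqP => E.
    have H1 : s'.+1 \in [pred i | i <= r] by rewrite inE; lia.
    have H2 : t'.-1 \in [pred i | i <= r] by rewrite inE; lia.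
    have := Hinj _ _ H1 H2 E; lia.
  case Hc: (a (x t'.-1) (x s'.+1)).
    by apply: (core s' t') => //; [rewrite -divn2 in Hjk; lia | right].
  have Hc' : a (x s'.+1) (x t'.-1) by rewrite Htour // Hc.
  apply: (IH s'.+1 t'.-1) => //; rewrite -divn2 in Hjk *; lia.
apply: (main (j - s).-1 s t) => //; lia.
Qed.
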